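(* Let $\Gamma\subset\mathbf{Z}^n$ be an almost periodic pattern. Then the function $\rho_\Gamma:\mathbf{Z}^n\to\mathbf{R}$ is Bohr almost periodic, i.e. for every $\varepsilon>0$ the set $\{v\in\mathbf{Z}^n : \sup_{u\in\mathbf{Z}^n}|\rho_\Gamma(u)-\rho_\Gamma(u+v)|<\varepsilon\}$ is relatively dense.
   Context: Balls are for the sup norm: $B(x,R)=\{y:\max_i|x_i-y_i|<R\}$, $B_R=B(0,R)$, $[B]=B\cap\mathbf{Z}^n$. Relatively dense: there is $R_0>0$ such that every ball of radius at least $R_0$ meets the set; uniformly discrete: there is $r>0$ such that every ball of radius at most $r$ contains at most one point; Delone: both. $D_R^+(\Gamma)=\sup_{x\in\mathbf{R}^n}\frac{\operatorname{Card}(B(x,R)\cap\Gamma)}{\operatorname{Card}(B(x,R)\cap\mathbf{Z}^n)}$. A Delone set $\Gamma\subset\mathbf{Z}^n$ is an almost periodic pattern if for every $\varepsilon>0$ there exist $R_\varepsilon>0$ and a relatively dense set $\mathcal N_\varepsilon$ with $D_R^+((\Gamma+v)\Delta\Gamma)<\varepsilon$ for all $R\ge R_\varepsilon$, $v\in\mathcal N_\varepsilon$. The density of a set $A\subset\mathbf{Z}^n$ is $D(A)=\lim_{R\to\infty}\operatorname{Card}(A\cap[B_R])/\operatorname{Card}[B_R]$ (the paper uses that these densities exist for the sets considered). For $v\in\mathbf{Z}^n$, $\rho_\Gamma(v)=\frac{D(\Gamma\cap(\Gamma-v))}{D(\Gamma)}\in[0,1]$. *)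

(* Defs.v *)
From HB Require Import structures.
From mathcomp Require Import all_boot all_order all_algebra.
From mathcomp Require Import all_classical all_reals all_analysis.
From mathcomp Require Import finmap.
Unset Printing Implicit Defensive.
Import Order.TTheory GRing.Theory Num.Theory.
Import numFieldNormedType.Exports.
Local Open Scope classical_set_scope.
Local Open Scope ring_scope.

Definition zpt (n : nat) := {ffun 'I_n -> int}.
Definition rpt (R : realType) (n : nat) := 'I_n -> R.

Definition zadd {n} (y v : zpt n) : zpt n := [ffun i => y i + v i].
Definition zsub {n} (y v : zpt n) : zpt n := [ffun i => y i - v i].

Definition zball {R : realType} {n} (x : rpt R n) (r : R) : set (zpt n) :=
  [set y | forall i : 'I_n, `|x i - (y i)%:~R| < r].

Definition card_set {n} (A : set (zpt n)) : nat := (#|` fset_set A |)%fset.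

Definition rel_dense (R : realType) {n} (A : set (zpt n)) : Prop :=
  exists R0 : R, 0 < R0 /\
    forall (x : rpt R n) (r : R), R0 <= r -> exists y, A y /\ zball x r y.

Definition unif_discrete (R : realType) {n} (A : set (zpt n)) : Prop :=
  exists r0 : R, 0 < r0 /\
    forall (x : rpt R n) (r : R), r <= r0 ->
      forall y z, A y -> zball x r y -> A z -> zball x r z -> y = z.

Definition delone (R : realType) {n} (A : set (zpt n)) : Prop :=
  rel_dense R A /\ unif_discrete R A.

Definition upper_dens {R : realType} {n} (A : set (zpt n)) (r : R) : R :=
  sup [set ((card_set (A `&` zball x r))%:R / (card_set (zball x r))%:R : R)
      | x in [set: rpt R n]].

Definition translate {n} (A : set (zpt n)) (v : zpt n) : set (zpt n) :=
  [set y | A (zsub y v)].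

Definition symdiff {T} (A B : set T) : set T := (A `\` B) `|` (B `\` A).

Definition almost_periodic_pattern (R : realType) {n} (G : set (zpt n)) : Prop :=
  delone R G /\
  forall eps : R, 0 < eps ->
    exists Reps : R, 0 < Reps /\
    exists N : set (zpt n), rel_dense R N /\
      forall (r : R) (v : zpt n), Reps <= r -> N v ->
        upper_dens (symdiff (translate G v) G) r < eps.

Definition origin (R : realType) n : rpt R n := fun _ => 0.

Definition density (R : realType) {n} (A : set (zpt n)) : R :=
  lim ((fun r : R => ((card_set (A `&` zball (origin R n) r))%:R /
                     (card_set (zball (origin R n) r))%:R : R)) x @[x --> +oo%R]).

Definition rho (R : realType) {n} (G : set (zpt n)) (v : zpt n) : R :=
  density R (G `&` [set y | G (zadd y v)]) / density R G.

(* Main.v *)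
Require Import Defs.
From HB Require Import structures.
From mathcomp Require Import all_boot all_order all_algebra.
From mathcomp Require Import all_classical all_reals all_analysis.
From mathcomp Require Import finmap zify ring lra.
Import Order.TTheory GRing.Theory Num.Theory.
Import numFieldNormedType.Exports.
Local Open Scope classical_set_scope.
Local Open Scope ring_scope.

Definition off {n} (z : zpt n) (m : nat) (j : {ffun 'I_n -> 'I_(2 * m).-1}) : zpt n :=
  [ffun i => z i + (j i)%:Z - (m%:Z - 1)].
Definition boxf {n} (z : zpt n) (m : nat) : {fset zpt n} :=
  [fset off z m j | j : {ffun 'I_n -> 'I_(2 * m).-1}]%fset.

Lemma boxfP n (z y : zpt n) m : (y \in boxf z m) <-> (forall i, `|y i - z i| < m%:Z).
Proof.
split.
  move=> /imfsetP [j _ ->] i; rewrite ffunE.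
  have := ltn_ord (j i); move: (nat_of_ord (j i)) => k hk.
  rewrite ltr_norml; apply/andP; split; lia.
move=> H.
have Hj : forall i, (absz (y i - z i + (m%:Z - 1))%R < (2 * m).-1)%N.
  move=> i; have := H i; rewrite ltr_norml => /andP[h1 h2]; lia.
apply/imfsetP; exists [ffun i => Ordinal (Hj i)] => //.
apply/ffunP => i /=; rewrite !ffunE /=.
have := H i; rewrite ltr_norml => /andP[h1 h2].
lia.
Qed.

Lemma off_inj n (z : zpt n) m : injective (off z m).
Proof.
move=> j1 j2 /ffunP h; apply/ffunP => i /=; have := h i; rewrite !ffunE => e.
apply: val_inj => /=; lia.
Qed.

Lemma card_boxf n (z : zpt n) m : #|` boxf z m| = ((2 * m).-1 ^ n)%N.
Proof.
rewrite card_imfset; last exact: off_inj.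
rewrite -(card_uniqP (enum_finmem_uniq _)).
rewrite (eq_card (enum_finmemE _)) /= card_ffun !card_ord //.
Qed.

Lemma sum_enum_finmem (R : realType) n (F : {fset zpt n}) (G : zpt n -> R) :
  \sum_(i <- enum_finmem (mem F)) G i = \sum_(i <- F) G i.
Proof.
apply: perm_big; apply: uniq_perm; rewrite ?enum_finmem_uniq ?fset_uniq //.

Qed.

Definition zadd' {n} (w : zpt n) (y : zpt n) := zadd y w.

Lemma zadd_inj n (w : zpt n) : injective (zadd' w).
Proof.
move=> a b /ffunP h; apply/ffunP => i /=; have := h i; rewrite /zadd' /zadd !ffunE. lia.
Qed.

Lemma boxf_shift n (z w : zpt n) m :
  boxf (zadd z w) m = [fset zadd' w y | y in boxf z m]%fset.
Proof.
apply/fsetP => y; apply/idP/idP.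
  move=> /boxfP H; apply/imfsetP; exists (zsub y w).
    apply/boxfP => i; have := H i; rewrite /zadd /zsub !ffunE; lia.
  by apply/ffunP => i /=; rewrite /zadd' /zadd /zsub !ffunE; lia.
move=> /imfsetP [x /boxfP H ->]; apply/boxfP => i; have := H i.
rewrite /zadd' /zadd /zsub !ffunE; lia.
Qed.

Definition cnt {R : realType} {n} (A : set (zpt n)) (F : {fset zpt n}) : R :=
  \sum_(y <- F) ((y \in A)%:R).

Lemma cnt_shift (R : realType) n (A : set (zpt n)) (z w : zpt n) m :
  cnt A (boxf (zadd z w) m) = cnt (R:=R) [set y | A (zadd y w)] (boxf z m).
Proof.
rewrite /cnt boxf_shift big_imfset; last by move=> a b _ _; apply: zadd_inj.
rewrite sum_enum_finmem; apply: eq_bigr => y _.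
by congr (_%:R); apply/idP/idP; rewrite !in_setE.
Qed.

Lemma cnt_ge0 {R : realType} {n : nat} (A : set (zpt n)) F : 0 <= cnt (R:=R) A F.
Proof. by apply: sumr_ge0 => i _; apply: ler0n. Qed.

Lemma cnt_le_card {R : realType} {n : nat} (A : set (zpt n)) F : cnt (R:=R) A F <= (#|` F|)%:R.
Proof.
rewrite card_fset_sum1 natr_sum; apply: ler_sum => i _.
by case: (i \in A).
Qed.

Lemma cnt_split {R : realType} {n : nat} (A : set (zpt n)) (F1 F2 : {fset zpt n}) :
  (F1 `<=` F2)%fset -> cnt (R:=R) A F2 = cnt A F1 + cnt A (F2 `\` F1)%fset.
Proof.
move=> sub; rewrite /cnt (big_fsetID _ (mem F1)) /=; congr (_ + _).
  apply: eq_fbigl => x; rewrite !inE /=; apply/idP/idP; first by case/andP.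
  by move=> h; rewrite h (fsubsetP sub).
by apply: eq_fbigl => x; rewrite !inE /= andbC.
Qed.

Lemma card_splitR {R : realType} {n : nat} (F1 F2 : {fset zpt n}) :
  (F1 `<=` F2)%fset -> (#|` (F2 `\` F1)%fset|)%:R = (#|` F2|)%:R - (#|` F1|)%:R :> R.
Proof.
move=> sub; rewrite cardfsDS // natrB //; exact: fsubset_leq_card.
Qed.

Lemma cnt_mono {R : realType} {n : nat} (A : set (zpt n)) (F1 F2 : {fset zpt n}) :
  (F1 `<=` F2)%fset -> cnt (R:=R) A F1 <= cnt A F2.
Proof. by move=> sub; rewrite (cnt_split A _ _ sub) lerDl cnt_ge0. Qed.

Lemma cnt_sandwich {R : realType} {n : nat} (A : set (zpt n)) (F1 F2 F3 F4 : {fset zpt n}) :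
  (F1 `<=` F3)%fset -> (F3 `<=` F2)%fset -> (F1 `<=` F4)%fset -> (F4 `<=` F2)%fset ->
  `|cnt (R:=R) A F3 - cnt A F4| <= (#|` F2|)%:R - (#|` F1|)%:R.
Proof.
move=> s13 s32 s14 s42.
have s12 : (F1 `<=` F2)%fset by apply: fsubset_trans s32.
have h1 := cnt_mono (R:=R) A _ _ s13; have h2 := cnt_mono (R:=R) A _ _ s32.
have h3 := cnt_mono (R:=R) A _ _ s14; have h4 := cnt_mono (R:=R) A _ _ s42.
have h5 := cnt_split (R:=R) A _ _ s12.
have h6 := cnt_le_card (R:=R) A (F2 `\` F1)%fset.
rewrite card_splitR // in h6.
rewrite ler_norml; apply/andP; split; lra.
Qed.

Lemma cnt_card {R : realType} {n : nat} (A : set (zpt n)) F :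
  cnt (R:=R) A F = (#|` [fset y in F | y \in A]%fset|)%:R.
Proof.
rewrite /cnt card_fset_sum1 natr_sum -big_fset_condE /= [RHS]big_mkcond /=.
by apply: eq_bigr => i _; case: (i \in A).
Qed.

Lemma cnt_setT {R : realType} {n : nat} (F : {fset zpt n}) : cnt (R:=R) setT F = (#|` F|)%:R.
Proof.
rewrite /cnt card_fset_sum1 natr_sum; apply: eq_bigr => i _.
by rewrite in_setT.
Qed.

Lemma powdiff (R : realFieldType) (x y : R) k : 0 <= y -> y <= x ->
  x ^+ k.+1 - y ^+ k.+1 <= (x - y) * (k.+1%:R * x ^+ k).
Proof.
move=> y0 yx; rewrite subrXX; apply: ler_wpM2l; first by rewrite subr_ge0.
have -> : k.+1%:R * x ^+ k = \sum_(i < k.+1) x ^+ k.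
  by rewrite sumr_const card_ord mulr_natl.
apply: ler_sum => i _ /=.
have x0 : 0 <= x by apply: le_trans yx.
have hi : (i <= k)%N by rewrite -ltnS.
rewrite -[X in _ <= x ^+ X](subnK hi) exprD; apply: ler_wpM2l; first exact: exprn_ge0.
by apply: lerXn2r; rewrite // nnegrE.
Qed.

Definition bN n m : nat := ((2 * m).-1 ^ n)%N.

Lemma bN_R (R : realFieldType) n k : (0 < k)%N -> (bN n k)%:R = (2 * k%:R - 1) ^+ n :> R.
Proof.
move=> k0; rewrite /bN natrX -subn1 natrB ?natrM //; lia.
Qed.

Lemma bN_gt0 (R : realFieldType) n k : (0 < k)%N -> 0 < (bN n k)%:R :> R.
Proof. by move=> k0; rewrite ltr0n /bN expn_gt0; apply/orP; left; lia. Qed.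

Lemma shell (R : realFieldType) n a c : (a < c)%N ->
  (bN n (c + a))%:R - (bN n (c - a))%:R <=
     (n%:R * 2 ^+ n.+1) * a%:R / c%:R * (bN n c)%:R :> R.
Proof.
move=> ac.
have c0 : (0 < c)%N by lia.
rewrite !bN_R //; try lia.
rewrite natrD natrB; last lia.
set t := 2 * c%:R - 1.
have c1 : 1 <= (c%:R : R) by rewrite ler1n.
have a0 : 0 <= (a%:R : R) by [].
have ac' : (a%:R : R) + 1 <= c%:R by rewrite natr1 ler_nat.
case: n => [|k]; first by rewrite !expr0 subrr mul0r !mul0r.
set X := 2 * (c%:R + a%:R) - 1; set Y := 2 * (c%:R - a%:R) - 1.
have Y0 : 0 <= Y by rewrite /Y; lra.
have YX : Y <= X by rewrite /Y /X; lra.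
have t0 : 0 <= t by rewrite /t; lra.
have hX : X <= 2 * t by rewrite /X /t; lra.
have hXk : X ^+ k <= 2 ^+ k * t ^+ k.
  rewrite -exprMn; apply: lerXn2r; rewrite // nnegrE; lra.
apply: (le_trans (@powdiff _ X Y k Y0 YX)).
have -> : X - Y = 4 * a%:R by rewrite /X /Y; lra.
have step : 4 * a%:R * (k.+1%:R * X ^+ k) <= 4 * a%:R * (k.+1%:R * (2 ^+ k * t ^+ k)) :> R.
  apply: ler_wpM2l; first lra.
  by apply: ler_wpM2l; first exact: ler0n.
apply: (le_trans step).
have -> : k.+1%:R * 2 ^+ k.+2 * a%:R / c%:R * t ^+ k.+1 =
   4 * a%:R * (k.+1%:R * (2 ^+ k * t ^+ k)) * (t / c%:R) :> R.
  rewrite !exprS; field; lra.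
rewrite ler_peMr //; last by rewrite ler_pdivlMr ?mul1r /t; lra.
apply: mulr_ge0; first lra.
apply: mulr_ge0; first exact: ler0n.
by apply: mulr_ge0; apply: exprn_ge0; lra.
Qed.

Lemma memsetf {n} (x : zpt n) (F : {fset zpt n}) : (x \in [set` F]) = (x \in F).
Proof. by apply/idP/idP; rewrite in_setE. Qed.


Lemma sum_split {R : realType} {n : nat} (G : zpt n -> R) (F1 F2 : {fset zpt n}) :
  (F1 `<=` F2)%fset -> \sum_(y <- F2) G y = \sum_(y <- F1) G y + \sum_(y <- (F2 `\` F1)%fset) G y.
Proof.
move=> sub; rewrite (big_fsetID _ (mem F1)) /=; congr (_ + _).
  apply: eq_fbigl => x; rewrite !inE /=; apply/idP/idP; first by case/andP.
  by move=> h; rewrite h (fsubsetP sub).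
by apply: eq_fbigl => x; rewrite !inE /= andbC.
Qed.

Lemma boxf_sym {n} (y z : zpt n) m : (y \in boxf z m) = (z \in boxf y m).
Proof.
apply/idP/idP => /boxfP H; apply/boxfP => i; by rewrite distrC.
Qed.

Lemma dcount {R : realType} {n : nat} (A : set (zpt n)) (Q Big Inner : {fset zpt n}) m :
  (forall z, z \in Q -> (boxf z m `<=` Big)%fset) ->
  (forall y, y \in Inner -> (boxf y m `<=` Q)%fset) -> (Inner `<=` Big)%fset ->
  (bN n m)%:R * cnt A Inner <= \sum_(z <- Q) cnt (R:=R) A (boxf z m) <= (bN n m)%:R * cnt A Big.
Proof.
move=> hQ hI sIB.
have e1 : \sum_(z <- Q) cnt (R:=R) A (boxf z m) =
   \sum_(y <- Big) ((y \in A)%:R * cnt [set` boxf y m] Q).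
  transitivity (\sum_(z <- Q) \sum_(y <- Big) ((y \in A)%:R * (y \in boxf z m)%:R : R)).
    apply: eq_big_seq => z zQ; rewrite /cnt.
    transitivity (\sum_(y <- boxf z m) ((y \in A)%:R * (y \in boxf z m)%:R : R)).
      by apply: eq_big_seq => y yB; rewrite yB mulr1.
    rewrite (big_fset_incl _ (hQ z zQ)) //.
    by move=> y yB yN; rewrite (negbTE yN) mulr0.
  rewrite exchange_big; apply: eq_bigr => y _; rewrite mulr_sumr /cnt.
  apply: eq_bigr => z _; rewrite boxf_sym.
  have -> : (z \in [set` boxf y m]) = (z \in boxf y m) by apply/idP/idP; rewrite in_setE.
  by [].

have hle : forall y, cnt (R:=R) [set` boxf y m] Q <= (bN n m)%:R.
  move=> y; rewrite cnt_card /bN -(card_boxf _ y m); rewrite ler_nat; apply: fsubset_leq_card.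
  by apply/fsubsetP => x; rewrite !inE /= memsetf => /andP[].
have heq : forall y, y \in Inner -> cnt (R:=R) [set` boxf y m] Q = (bN n m)%:R.
  move=> y yI; rewrite cnt_card /bN -(card_boxf _ y m); congr (_%:R); congr (#|` _|).
  apply/fsetP => x; rewrite !inE /= memsetf; apply/idP/idP; first by case/andP.
  by move=> h; rewrite h (fsubsetP (hI y yI)).
rewrite e1; apply/andP; split.
  rewrite (sum_split _ _ _ sIB) /cnt mulr_sumr.
  have -> : \sum_(i <- Inner) (bN n m)%:R * (i \in A)%:R =
            \sum_(y <- Inner) ((y \in A)%:R * cnt (R:=R) [set` boxf y m] Q).
    by apply: eq_big_seq => y yI; rewrite heq // mulrC.
  rewrite lerDl; apply: sumr_ge0 => y _; apply: mulr_ge0; [exact: ler0n|exact: cnt_ge0].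
rewrite /cnt mulr_sumr; apply: ler_sum => y _; rewrite mulrC.
by apply: ler_wpM2r; [case: (y \in A)| exact: hle].
Qed.

Definition zz n : zpt n := [ffun _ => 0].

Definition hypd {R : realType} {n} (A : set (zpt n)) (d : R) (M s : nat) :=
  forall m (z : zpt n), (M <= m)%N -> exists w : zpt n, (forall i, `|w i| < s%:Z) /\
    `|cnt A (boxf z m) - cnt A (boxf w m)| <= d * (bN n m)%:R.

Lemma box_incl {n} (z z' : zpt n) m m' :
  (forall y, (forall i, `|y i - z i| < m%:Z) -> forall i, `|y i - z' i| < m'%:Z) ->
  (boxf z m `<=` boxf z' m')%fset.
Proof. by move=> H; apply/fsubsetP => y /boxfP h; apply/boxfP; apply: H. Qed.

Lemma P1 {R : realType} {n} (A : set (zpt n)) (d : R) M s m z :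
  hypd A d M s -> (M <= m)%N -> (s <= m)%N ->
  `|cnt A (boxf z m) - cnt A (boxf (zz n) m)| <=
     d * (bN n m)%:R + ((bN n (m + s))%:R - (bN n (m - s))%:R).
Proof.
move=> H Mm sm; have [w [hw hd]] := H m z Mm.
have s1 : (boxf (zz n) (m - s) `<=` boxf w m)%fset.
  apply: box_incl => y hy i; have := hy i; have := hw i; rewrite /zz ffunE; lia.
have s2 : (boxf w m `<=` boxf (zz n) (m + s))%fset.
  apply: box_incl => y hy i; have := hy i; have := hw i; rewrite /zz ffunE; lia.
have s3 : (boxf (zz n) (m - s) `<=` boxf (zz n) m)%fset.
  apply: box_incl => y hy i; have := hy i; lia.
have s4 : (boxf (zz n) m `<=` boxf (zz n) (m + s))%fset.
  apply: box_incl => y hy i; have := hy i; lia.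
have := cnt_sandwich (R:=R) A _ _ _ _ s1 s2 s3 s4.
rewrite !card_boxf -/(bN n _) -/(bN n _) => h.
have h2 := ler_normD (cnt (R:=R) A (boxf z m) - cnt A (boxf w m)) (cnt (R:=R) A (boxf w m) - cnt A (boxf (zz n) m)).
have e : cnt A (boxf z m) - cnt A (boxf (zz n) m) = (cnt A (boxf z m) - cnt A (boxf w m)) + (cnt A (boxf w m) - cnt (R:=R) A (boxf (zz n) m)) by ring.
rewrite e.
apply: (le_trans h2); exact: lerD.
Qed.

Definition gs {R : realType} {n} (A : set (zpt n)) (k : nat) : R :=
  cnt A (boxf (zz n) k) / (bN n k)%:R.

Lemma sum_const_fset {R : realType} {n} (Q : {fset zpt n}) (c : R) :
  \sum_(z <- Q) c = (#|` Q|)%:R * c.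
Proof. by rewrite card_fset_sum1 natr_sum mulr_suml; apply: eq_bigr => z _; rewrite mul1r. Qed.

Lemma gap {R : realType} {n} (A : set (zpt n)) (d : R) M s m K :
  hypd A d M s -> (M <= m)%N -> (s < m)%N -> (m < K)%N ->
  `|gs A K - gs A m| <= d + (n%:R * 2 ^+ n.+1) * s%:R / m%:R + (n%:R * 2 ^+ n.+1) * m%:R / K%:R.
Proof.
move=> H Mm sm mK.
set C := n%:R * 2 ^+ n.+1.
have m0 : (0 < m)%N by lia.
have K0 : (0 < K)%N by lia.
set bm := (bN n m)%:R : R; set bK := (bN n K)%:R : R.
have bm0 : 0 < bm by apply: bN_gt0.
have bK0 : 0 < bK by apply: bN_gt0.
set Q := boxf (zz n) K.
set S := \sum_(z <- Q) cnt (R:=R) A (boxf z m).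
set c0m := cnt (R:=R) A (boxf (zz n) m); set c0K := cnt (R:=R) A (boxf (zz n) K).
set E1 := d * bm + ((bN n (m + s))%:R - (bN n (m - s))%:R).
have ii : `|S - bK * c0m| <= bK * E1.
  have -> : S - bK * c0m = \sum_(z <- Q) (cnt A (boxf z m) - c0m).
    rewrite sumrB /bK -/Q sum_const_fset /Q card_boxf //.
  apply: (le_trans (ler_norm_sum _ _ _)).
  apply: (@le_trans _ _ (\sum_(z <- Q) E1)).
    apply: ler_sum => z _; apply: P1 H Mm _; lia.
  by rewrite sum_const_fset /Q card_boxf.
set D2 := (bN n (K + m))%:R - (bN n (K - m))%:R : R.
have iii : `|S - bm * c0K| <= bm * D2.
  have sQ : forall z, z \in Q -> (boxf z m `<=` boxf (zz n) (K + m))%fset.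
    move=> z /boxfP hz; apply: box_incl => y hy i; have := hy i; have := hz i.
    rewrite /zz ffunE; lia.
  have sI : forall y, y \in boxf (zz n) (K - m) -> (boxf y m `<=` Q)%fset.
    move=> y /boxfP hy; apply: box_incl => x hx i; have := hy i; have := hx i.
    rewrite /zz ffunE; lia.
  have sIB : (boxf (zz n) (K - m) `<=` boxf (zz n) (K + m))%fset.
    apply: box_incl => y hy i; have := hy i; lia.
  have /andP [dc1 dc2] := dcount (R:=R) A _ _ _ m sQ sI sIB.
  have sIK : (boxf (zz n) (K - m) `<=` Q)%fset.
    apply: box_incl => y hy i; have := hy i; lia.
  have sKB : (Q `<=` boxf (zz n) (K + m))%fset.
    apply: box_incl => y hy i; have := hy i; lia.
  have h1 := cnt_mono (R:=R) A _ _ sIK.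
  have h2 := cnt_mono (R:=R) A _ _ sKB.
  have := cnt_sandwich (R:=R) A _ _ _ _ sIB (fsubset_refl _) (fsubset_refl _) sIB.
  rewrite !card_boxf -/(bN n _) -/(bN n _) -/D2 => h3.
  have h4 : cnt (R:=R) A (boxf (zz n) (K + m)) - cnt A (boxf (zz n) (K - m)) <= D2.
    by apply: le_trans h3; apply: ler_norm.
  have h5 : bm * (cnt (R:=R) A (boxf (zz n) (K + m)) - cnt A (boxf (zz n) (K - m))) <= bm * D2.
    by apply: ler_wpM2l => //; apply: ltW.
  have h6 : bm * cnt (R:=R) A (boxf (zz n) (K - m)) <= bm * c0K.
    by apply: ler_wpM2l => //; apply: ltW.
  have h7 : bm * c0K <= bm * cnt (R:=R) A (boxf (zz n) (K + m)).
    by apply: ler_wpM2l => //; apply: ltW.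
rewrite -/bm -/S in dc1 dc2.   rewrite ler_norml; apply/andP; split; lra.
have sh1 : (bN n (m + s))%:R - (bN n (m - s))%:R <= C * s%:R / m%:R * bm :> R.
  by apply: shell.
have sh2 : D2 <= C * m%:R / K%:R * bK by apply: shell.
have key : `|bm * c0K - bK * c0m| <= bm * bK * (d + C * s%:R / m%:R + C * m%:R / K%:R).
  have e : bm * c0K - bK * c0m = (bm * c0K - S) + (S - bK * c0m) by ring.
  rewrite e; apply: (le_trans (ler_normD _ _)).
  rewrite distrC in iii.
  have h1 : bm * D2 <= bm * (C * m%:R / K%:R * bK) by apply: ler_wpM2l => //; apply: ltW.
  have h2 : bK * E1 <= bK * (d * bm + C * s%:R / m%:R * bm).
    by apply: ler_wpM2l; [apply: ltW | rewrite /E1 lerD2l].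
  have e2 : bm * bK * (d + C * s%:R / m%:R + C * m%:R / K%:R) =
     bm * (C * m%:R / K%:R * bK) + bK * (d * bm + C * s%:R / m%:R * bm) by ring.
  rewrite e2; apply: lerD; [exact: le_trans iii h1 | exact: le_trans ii h2].
have e3 : bm * c0K - bK * c0m = bm * bK * (gs A K - gs A m).
  rewrite /gs -/c0K -/c0m -/bm -/bK; field; apply/andP; split; apply: lt0r_neq0 => //.
rewrite e3 normrM (gtr0_norm (mulr_gt0 bm0 bK0)) in key.
by rewrite -(ler_pM2l (mulr_gt0 bm0 bK0)).
Qed.

Lemma small_div {R : realType} (x e : R) : 0 <= x -> 0 < e ->
  exists N : nat, (0 < N)%N /\ forall k, (N <= k)%N -> x / k%:R <= e.
Proof.
move=> x0 e0; exists (Num.truncn (x / e)).+1; split => // k Nk.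
have := truncnS_gt (x / e).
have k0 : 0 < (k%:R : R) by rewrite ltr0n; lia.
have : ((Num.truncn (x / e)).+1%:R : R) <= k%:R by rewrite ler_nat.
move=> h1 h2; have h3 : x / e < k%:R by apply: lt_le_trans h2 h1.
rewrite ler_pdivrMr // mulrC -ler_pdivrMr //; exact: ltW.
Qed.

Lemma gs_cauchy {R : realType} {n} (A : set (zpt n)) :
  (forall d : R, 0 < d -> exists M s, hypd A d M s) ->
  forall e : R, 0 < e -> exists m0 K0 : nat, forall K, (K0 <= K)%N ->
    `|gs A K - gs A m0| < e.
Proof.
move=> H e e0.
have [M [s Hd]] := H (e / 4) ltac:(lra).
set C : R := n%:R * 2 ^+ n.+1.
have C0 : 0 <= C by apply: mulr_ge0; [exact: ler0n | exact: exprn_ge0].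
have [N1 [_ hN1]] := small_div (C * s%:R) (e / 4) ltac:(apply: mulr_ge0 => //) ltac:(lra).
set m0 := maxn (maxn M s.+1) N1.
have [N2 [_ hN2]] := small_div (C * m0%:R) (e / 4) ltac:(apply: mulr_ge0 => //) ltac:(lra).
exists m0, (maxn m0.+1 N2) => K hK.
have := gap A _ _ _ m0 K Hd ltac:(lia) ltac:(lia) ltac:(lia).
rewrite -/C => h.
have := hN1 m0 ltac:(lia); have := hN2 K ltac:(lia).
move=> a b; lra.
Qed.

Definition zreal {R : realType} {n} (z : zpt n) : rpt R n := fun i => (z i)%:~R.

Lemma zball_int {R : realType} {n} (z : zpt n) (r : R) : 0 < r ->
  zball (zreal z) r = [set` boxf z `|Num.ceil r|%N].
Proof.
move=> r0; have c0 : 0 < Num.ceil r by rewrite ceil_gt0.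
apply/funext => y; apply/propext; rewrite /zball /=; split.
  move=> H; rewrite /= ?inE; apply/boxfP => i; have := H i.
  rewrite /zreal -intrB -intr_norm -ceil_gt_int distrC gez0_abs //; exact: ltW.
move=> /boxfP H i; have := H i.
rewrite /zreal -intrB -intr_norm -ceil_gt_int distrC gez0_abs //; exact: ltW.
Qed.

Lemma card_set_fset {n} (F : {fset zpt n}) : card_set [set` F] = #|` F|.
Proof. by rewrite /card_set set_fsetK. Qed.

Lemma card_set_cnt {R : realType} {n} (A : set (zpt n)) (F : {fset zpt n}) :
  (card_set (A `&` [set` F]))%:R = cnt (R:=R) A F.
Proof.
rewrite cnt_card /card_set.
have -> : A `&` [set` F] = [set` [fset y in F | y \in A]%fset].
  apply/funext => y; apply/propext; rewrite /=; split.
    by move=> [hA hF]; rewrite !inE /=; apply/andP; split; [exact: hF| rewrite in_setE].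
  rewrite !inE /= => /andP[hF hA]; split; [by rewrite in_setE in hA | exact: hF].
by rewrite set_fsetK.
Qed.

Lemma origin_zero (R : realType) n : origin R n = zreal (zz n).
Proof. by apply/funext => i; rewrite /zreal /zz ffunE. Qed.

Definition fA {R : realType} {n} (A : set (zpt n)) (r : R) : R :=
  (card_set (A `&` zball (origin R n) r))%:R / (card_set (zball (origin R n) r))%:R.

Lemma fA_gs {R : realType} {n} (A : set (zpt n)) (r : R) : 0 < r ->
  fA A r = gs A `|Num.ceil r|%N.
Proof.
move=> r0; rewrite /fA /gs origin_zero zball_int // card_set_cnt card_set_fset card_boxf //.
Qed.

Lemma dens_cvg {R : realType} {n} (A : set (zpt n)) :
  (forall d : R, 0 < d -> exists M s, hypd A d M s) -> cvg ((@fA R n A) x @[x --> +oo]).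
Proof.
move=> H; apply/cauchy_cvgP; apply: cauchy_exP => eps eps0.
have [m0 [K0 hK]] := gs_cauchy A H eps eps0.
exists (gs A m0); exists (K0%:R); split; first exact: num_real.
move=> r hr; have r0 : 0 < r by apply: le_lt_trans hr.
rewrite /= -ball_normE /= fA_gs //.
rewrite distrC; apply: hK.
have c0 : 0 < Num.ceil r by rewrite ceil_gt0.
have : (K0%:Z < Num.ceil r) by rewrite ceil_gt_int; apply: le_lt_trans hr; rewrite -pmulrn.
lia.
Qed.

Lemma fset_set_inf {T : choiceType} (A : set T) : ~ finite_set A -> fset_set A = fset0%fset.
Proof. by move=> h; rewrite /fset_set; case: pselect. Qed.

Lemma ratio_le1 {R : realType} {n} (A B : set (zpt n)) :
  (card_set (A `&` B))%:R / (card_set B)%:R <= (1 : R).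
Proof.
have [fB|iB] := pselect (finite_set B).
  have fAB : finite_set (A `&` B) by apply: sub_finite_set fB; apply: subIsetr.
  have le : (card_set (A `&` B) <= card_set B)%N.
    rewrite /card_set; apply: fsubset_leq_card; rewrite -fset_set_sub //; exact: subIsetr.
  have [->|b0] := eqVneq (card_set B) 0%N; first by rewrite invr0 mulr0.
  rewrite ler_pdivrMr ?mul1r ?ler_nat // ltr0n lt0n //.
by rewrite /card_set (fset_set_inf B iB) cardfs0 invr0 mulr0.
Qed.

Lemma ratio_le_ud {R : realType} {n} (A : set (zpt n)) (x : rpt R n) (r : R) :
  (card_set (A `&` zball x r))%:R / (card_set (zball x r))%:R <= upper_dens A r.
Proof.
rewrite /upper_dens; apply: ub_le_sup; last by exists x.
exists 1 => y [x' _ <-]; exact: ratio_le1.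
Qed.

Lemma cnt_le_ud {R : realType} {n} (D : set (zpt n)) (z : zpt n) (r : R) : 0 < r ->
  cnt D (boxf z `|Num.ceil r|%N) <= upper_dens D r * (bN n `|Num.ceil r|%N)%:R.
Proof.
move=> r0; have := ratio_le_ud D (zreal z) r.
rewrite zball_int // card_set_cnt card_set_fset card_boxf -/(bN n _).
have c0 : (0 < `|Num.ceil r|%N)%N.
  have : 0 < Num.ceil r by rewrite ceil_gt0.
  lia.
by rewrite ler_pdivrMr //; apply: bN_gt0.
Qed.

Definition Xs {n} (G : set (zpt n)) (u : zpt n) : set (zpt n) := G `&` [set y | G (zadd y u)].

Lemma mem_Xs {n} (G : set (zpt n)) u y : (y \in Xs G u) = (y \in G) && (zadd y u \in G).
Proof. by rewrite /Xs in_setI; congr (_ && _); apply/idP/idP; rewrite !in_setE. Qed.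

Lemma mem_symdiff {T} (A B : set T) t : (t \in symdiff A B) = ((t \in A) != (t \in B)).
Proof. rewrite /symdiff in_setU !in_setD. case: (t \in A); by case: (t \in B). Qed.

Lemma mem_translate {n} (G : set (zpt n)) v t : (t \in translate G v) = (zsub t v \in G).
Proof. by apply/idP/idP; rewrite !in_setE. Qed.

Lemma mem_shift {n} (A : set (zpt n)) w y : (y \in [set t | A (zadd t w)]) = (zadd y w \in A).
Proof. by apply/idP/idP; rewrite !in_setE. Qed.

Lemma ind4 {R : realType} (a b c e : bool) :
  `|(a && b)%:R - (c && e)%:R| <= (a != c)%:R + (b != e)%:R :> R.
Proof. by case: a; case: b; case: c; case: e; rewrite /= ?subrr ?normr0 ?sub0r ?subr0 ?normrN ?normr1 ?addr0 ?add0r ?ler01 ?lexx // ler_wpDl. Qed.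

Lemma cnt_diff_le {R : realType} {n} (A B C E : set (zpt n)) (F : {fset zpt n}) :
  (forall y, `|(y \in A)%:R - (y \in B)%:R| <= (y \in C)%:R + (y \in E)%:R :> R) ->
  `|cnt A F - cnt B F| <= cnt (R:=R) C F + cnt E F.
Proof.
move=> H; rewrite /cnt -sumrB -big_split /=.
apply: (le_trans (ler_norm_sum _ _ _)); apply: ler_sum => y _; exact: H.
Qed.

Lemma ceil_nat {R : realType} (m : nat) : Num.ceil (m%:R : R) = m%:Z.
Proof. by rewrite pmulrn intrKceil. Qed.

Lemma AP_hyp {R : realType} {n} (G : set (zpt n)) (u : zpt n) :
  almost_periodic_pattern R G -> forall d : R, 0 < d -> exists M s, hypd (Xs G u) d M s.
Proof.
move=> [_ Hap] d d0.
have [Reps [Reps0 [N [[R0 [R00 HN]] HN2]]]] := Hap (d / 2) ltac:(lra).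
exists `|Num.ceil Reps|%N, `|Num.ceil R0|%N => m z Mm.
have [v [Nv zv]] := HN (zreal z) R0 (lexx _).
have cR0 : 0 < Num.ceil R0 by rewrite ceil_gt0.
have cRe : 0 < Num.ceil Reps by rewrite ceil_gt0.
have m0 : (0 < m)%N by lia.
exists (zsub z v); split.
  move=> i; have := zv i.
  rewrite /zreal -intrB -intr_norm -ceil_gt_int /zsub ffunE => h.
  have h1 : `|z i - v i| < Num.ceil R0 := h.
  have h2 : 0 < Num.ceil R0 := cR0.
  have hh : `|z i - v i| < (`|Num.ceil R0|%N)%:Z by lia.
  exact: hh.
set D := symdiff (translate G v) G.
have ez : z = zadd (zsub z v) v by apply/ffunP => i /=; rewrite /zadd /zsub !ffunE; lia.
rewrite [X in cnt _ (boxf X m)]ez cnt_shift.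
set w := zsub z v.
have hpt : forall y, `|(y \in [set y | Xs G u (zadd y v)])%:R - (y \in Xs G u)%:R| <=
   (y \in [set y | D (zadd y v)])%:R + (y \in [set y | D (zadd y (zadd v u))])%:R :> R.
  move=> y; rewrite !mem_shift !mem_Xs /D !mem_symdiff !mem_translate.
  have e1 : zsub (zadd y v) v = y by apply/ffunP => i /=; rewrite /zadd /zsub !ffunE; lia.
  have e2 : zsub (zadd y (zadd v u)) v = zadd y u by apply/ffunP => i /=; rewrite /zadd /zsub !ffunE; lia.
  have e3 : zadd (zadd y v) u = zadd y (zadd v u) by apply/ffunP => i /=; rewrite /zadd !ffunE; lia.
  rewrite e1 e2 e3 [(y \in G) == _]eq_sym [(zadd y u \in G) == _]eq_sym; exact: ind4.
apply: (le_trans (cnt_diff_le _ _ _ _ _ hpt)).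
rewrite -!cnt_shift.
have hm : (m%:R : R) >= Reps.
  apply: (le_trans (ceil_ge Reps)); have : (Num.ceil Reps <= m%:Z) by lia.
  by rewrite -(ler_int R) => h; apply: (le_trans h); rewrite -pmulrn.
have mR0 : 0 < (m%:R : R) by rewrite ltr0n.
have hud := HN2 (m%:R) v hm Nv; rewrite -/D in hud.
have bm0 : 0 < (bN n m)%:R :> R by apply: bN_gt0.
have key : forall c, cnt (R:=R) D (boxf c m) <= d / 2 * (bN n m)%:R.
  move=> c; have := cnt_le_ud D c (m%:R) mR0; rewrite ceil_nat /= => h.
  apply: (le_trans h); apply: ler_wpM2r; [exact: ltW | exact: ltW].
have := key (zadd w v); have := key (zadd w (zadd v u)); lra.
Qed.

Lemma lim_close {R : realType} (f g : R -> R) (d : R) :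
  cvg (f x @[x --> +oo]) -> cvg (g x @[x --> +oo]) ->
  (\forall x \near +oo, `|f x - g x| <= d) ->
  `|lim (f x @[x --> +oo]) - lim (g x @[x --> +oo])| <= d.
Proof.
move=> cf cg H.
have cg' : cvg ((g + cst d) x @[x --> +oo]) by apply: is_cvgD => //; exact: is_cvg_cst.
have cf' : cvg ((f + cst d) x @[x --> +oo]) by apply: is_cvgD => //; exact: is_cvg_cst.
have h1 : lim (f x @[x --> +oo]) <= lim ((g + cst d) x @[x --> +oo]).
  apply: ler_lim => //; apply: filterS H => x /=; rewrite ler_norml => /andP[a b]; have -> : (g + cst d) x = g x + d by []. lra.
have h2 : lim (g x @[x --> +oo]) <= lim ((f + cst d) x @[x --> +oo]).
  apply: ler_lim => //; apply: filterS H => x /=; rewrite ler_norml => /andP[a b]; have -> : (f + cst d) x = f x + d by []. lra.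
have e1 : lim ((g + cst d) x @[x --> +oo]) = lim (g x @[x --> +oo]) + d.
  rewrite limD //; last exact: is_cvg_cst.
  by rewrite lim_cst.
have e2 : lim ((f + cst d) x @[x --> +oo]) = lim (f x @[x --> +oo]) + d.
  rewrite limD //; last exact: is_cvg_cst.
  by rewrite lim_cst.
rewrite e1 in h1; rewrite e2 in h2.
rewrite ler_norml; apply/andP; split; lra.
Qed.

Lemma rel_dense_mono {R : realType} {n} (A B : set (zpt n)) :
  rel_dense R A -> A `<=` B -> rel_dense R B.
Proof.
move=> [R0 [R00 H]] AB; exists R0; split => // x r hr.
by have [y [Ay By]] := H x r hr; exists y; split => //; apply: AB.
Qed.

Lemma fA_diff {R : realType} {n} (G : set (zpt n)) (u v : zpt n) (r d : R) :
  0 < r -> upper_dens (symdiff (translate G v) G) r < d ->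
  `|fA (Xs G u) r - fA (Xs G (zadd u v)) r| <= d.
Proof.
move=> r0 hud; rewrite !fA_gs //; set k := `|Num.ceil r|%N.
have k0 : (0 < k)%N.
  have : 0 < Num.ceil r by rewrite ceil_gt0.
  rewrite /k; lia.
set D := symdiff (translate G v) G.
have bk0 : 0 < (bN n k)%:R :> R by apply: bN_gt0.
have hpt : forall y, `|(y \in Xs G u)%:R - (y \in Xs G (zadd u v))%:R| <=
   (y \in [set y | D (zadd y (zadd u v))])%:R + (y \in (set0 : set (zpt n)))%:R :> R.
  move=> y; rewrite !mem_Xs mem_shift /D mem_symdiff mem_translate in_set0 addr0.
  have e2 : zsub (zadd y (zadd u v)) v = zadd y u by apply/ffunP => i /=; rewrite /zadd /zsub !ffunE; lia.
  rewrite e2; case: (y \in G); case: (zadd y u \in G); case: (zadd y (zadd u v) \in G);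
    by rewrite /= ?subrr ?normr0 ?subr0 ?sub0r ?normrN ?normr1.
have h := cnt_diff_le _ _ _ _ (boxf (zz n) k) hpt.
have c0 : cnt (R:=R) (set0 : set (zpt n)) (boxf (zz n) k) = 0.
  by rewrite /cnt big1 // => y _; rewrite in_set0.
rewrite -cnt_shift c0 addr0 in h.
have h2 := cnt_le_ud D (zadd (zz n) (zadd u v)) r r0; rewrite -/k in h2.
have ib : 0 < ((bN n k)%:R : R)^-1 by rewrite invr_gt0.
rewrite /gs -mulrBl normrM (gtr0_norm ib) ler_pdivrMr //.
apply: (le_trans h); apply: (le_trans h2); apply: ler_wpM2r; [exact: ltW | exact: ltW].
Qed.

Theorem lemma2p7 (R : realType) (n : nat) (G : set (zpt n)) :
  almost_periodic_pattern R G ->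
  forall eps : R, 0 < eps ->
    rel_dense R [set v : zpt n |
      sup [set `|rho R G u - rho R G (zadd u v)| | u in [set: zpt n]] < eps].
Proof.
move=> HG eps eps0.
set DG := density R G.
have cvgX : forall u, cvg ((@fA R n (Xs G u)) x @[x --> +oo]).
  by move=> u; apply: dens_cvg; apply: AP_hyp.
pose d : R := if DG == 0 then 1 else eps * `|DG| / 2.
have d0 : 0 < d.
  rewrite /d; case: eqP => // /eqP h; apply: divr_gt0 => //.
  by apply: mulr_gt0 => //; rewrite normr_gt0.
have [Reps [Reps0 [N [HNd HN]]]] := HG.2 d d0.
apply: (rel_dense_mono N _ HNd) => v Nv /=.
have bnd : forall u, `|rho R G u - rho R G (zadd u v)| <= eps / 2.
  move=> u; rewrite /rho -/DG.
  have [DG0|DGn0] := eqVneq DG 0.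
    by rewrite DG0 invr0 !mulr0 subrr normr0; lra.
  change (`|lim ((@fA R n (Xs G u)) x @[x --> +oo]) / DG -
            lim ((@fA R n (Xs G (zadd u v))) x @[x --> +oo]) / DG| <= eps / 2).
  have hc : `|lim ((@fA R n (Xs G u)) x @[x --> +oo]) -
            lim ((@fA R n (Xs G (zadd u v))) x @[x --> +oo])| <= d.
    apply: lim_close => //.
    exists Reps; split; first exact: num_real.
    move=> r hr; apply: fA_diff; first exact: lt_trans hr.
    by apply: HN => //; apply: ltW.
  rewrite -mulrBl normrM normfV.
  have aD : 0 < `|DG| by rewrite normr_gt0.
  rewrite ler_pdivrMr //; apply: (le_trans hc).
  rewrite /d (negbTE DGn0); lra.
have : sup [set `|rho R G u - rho R G (zadd u v)| | u in [set: zpt n]] <= eps / 2.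
  apply: ge_sup; first by exists `|rho R G (zz n) - rho R G (zadd (zz n) v)|, (zz n).
  by move=> y [u _ <-]; apply: bnd.
lra.
Qed.
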